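(* There exist a finite-dimensional inner product vector space $(E,g)$ over $k$ ($k=\mathbb R$ or $\mathbb C$), an endomorphism $f\in\operatorname{End}_k(E)$ and $f$-invariant subspaces $\mathcal H_f=\{H_1,\dots,H_n\}$ with $E=H_1\oplus\dots\oplus H_n$ such that $f^+_{\mathcal H_f}\ne f^\dagger$.
   Context: For an endomorphism $h$ of a finite-dimensional inner product space $H$, its Moore-Penrose inverse $h^\dagger$ is the linear map equal to $(h|_{[\operatorname{Ker} h]^\perp})^{-1}$ on $\operatorname{Im} h$ and $0$ on $[\operatorname{Im} h]^\perp$. With $f_i=f|_{H_i}$ and $H_i$ carrying the restricted inner product, $f^+_{\mathcal H_f}$ is the unique endomorphism of $E$ with $f^+_{\mathcal H_f}|_{H_i}=f_i^\dagger$ for each $i$. *)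

(* Defs.v *)
From HB Require Import structures.
From mathcomp Require Import all_boot all_order all_algebra.
From mathcomp Require Import complex.
From mathcomp Require Import reals.
Set Implicit Arguments. Unset Strict Implicit. Unset Printing Implicit Defensive.
Import Order.TTheory GRing.Theory Num.Theory.
Local Open Scope ring_scope.

(* Conventions: a finite-dimensional inner product space over k is modelled
   (up to isometric isomorphism) as E = 'rV[K]_m (row vectors, mathcomp's
   convention) with inner product g(u,v) = u G (conj v)^T for a matrix G making
   g Hermitian and positive definite; [c] is the conjugation of k (identity
   for k = R).  Endomorphisms are matrices acting on the right: u |-> u *m f.
   Subspaces are row spaces of square matrices (mxalgebra). *)

Section InnerProduct.
Variable K : numFieldType.
Variable c : K -> K.
Variable m : nat.

Definition ip (G : 'M[K]_m) (u v : 'rV[K]_m) : K :=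
  (u *m G *m (map_mx c v)^T) 0 0.

Definition is_inner_product (G : 'M[K]_m) : Prop :=
  (forall u v, ip G u v = c (ip G v u)) /\
  (forall u, u != 0 -> 0 < ip G u u).

(* [P] is the Moore-Penrose inverse of the restriction f_H = f|_H of f to the
   (f-invariant) subspace H, H carrying the restricted inner product, i.e.
   P|_H = (f_H|_{[Ker f_H]^perp})^{-1} on Im f_H and 0 on [Im f_H]^perp
   (orthogonal complements taken inside H). *)
Definition is_MP_on (G : 'M[K]_m) (H f P : 'M[K]_m) : Prop :=
  (forall y : 'rV[K]_m, (y <= H *m f)%MS ->
     [/\ (y *m P <= H)%MS,
         (forall x : 'rV[K]_m, (x <= H :&: kermx f)%MS -> ip G x (y *m P) = 0)
       & y *m P *m f = y]) /\
  (forall y : 'rV[K]_m, (y <= H)%MS ->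
     (forall x : 'rV[K]_m, (x <= H *m f)%MS -> ip G x y = 0) ->
     y *m P = 0).

Definition is_MP (G f P : 'M[K]_m) : Prop := is_MP_on G 1%:M f P.

(* f^+_{H_f}: the endomorphism of E whose restriction to each H_i is f_i^dagger *)
Definition is_block_MP n (G f : 'M[K]_m) (H : 'I_n -> 'M[K]_m) (P : 'M[K]_m) : Prop :=
  forall i, is_MP_on G (H i) f P.

Definition counterexample_exists : Prop :=
  exists (G f : 'M[K]_m) (n : nat) (H : 'I_n -> 'M[K]_m),
    [/\ is_inner_product G,
        (forall i, stablemx (H i) f),
        (\sum_(i < n) H i :=: 1%:M)%MS
      & mxdirect (\sum_(i < n) H i)] /\
    [/\ (exists P, is_block_MP G f H P),
        (exists Q, is_MP G f Q)
      & (forall P Q, is_block_MP G f H P -> is_MP G f Q -> P != Q)].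
End InnerProduct.

(* Main.v *)
Require Import Defs.
From HB Require Import structures.
From mathcomp Require Import all_boot all_order all_algebra.
From mathcomp Require Import complex.
From mathcomp Require Import reals.
Import Order.TTheory GRing.Theory Num.Theory.
Local Open Scope ring_scope.

Section Gen.
Variable K : numFieldType.
Variable c : K -> K.
Hypothesis cD : forall a b, c (a + b) = c a + c b.
Hypothesis cM : forall a b, c (a * b) = c a * c b.
Hypothesis cK : forall a, c (c a) = a.
Hypothesis cpos : forall a, a != 0 -> 0 < a * c a.

Lemma c0 : c 0 = 0.
Proof. have h := cD 0 0; rewrite addr0 in h; by apply: (addrI (c 0)); rewrite addr0 -h. Qed.

Definition mk2 (a b : K) : 'rV[K]_2 := \row_(j < 2) (if (j : nat) == 0%N then a else b).

Lemma rv2 (y : 'rV[K]_2) : y = mk2 (y 0 0) (y 0 1).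
Proof.
apply/rowP => j; rewrite mxE; case: j => [[|[|k]] Hk] //=; congr (y 0 _); exact: val_inj.
Qed.

Lemma mk2_inj a b a' b' : mk2 a b = mk2 a' b' -> a = a' /\ b = b'.
Proof.
move=> /rowP E; have := E 0; have := E 1; rewrite !mxE /=; by [].
Qed.

Lemma mk2M a b (M : 'M[K]_2) :
  mk2 a b *m M = mk2 (a * M 0 0 + b * M 1 0) (a * M 0 1 + b * M 1 1).
Proof.
apply/rowP => j; rewrite !mxE !big_ord_recl big_ord0 !mxE /= addr0.
case: j => [[|[|k]] Hk] //=.
all: by congr (_ * M _ _ + _ * M _ _); apply: val_inj.
Qed.
Lemma cge0 a : 0 <= a * c a.
Proof. have [->|/cpos/ltW//] := eqVneq a 0; by rewrite mul0r. Qed.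

Lemma cinj a : c a = 0 -> a = 0.
Proof. by move=> h; rewrite -[a]cK h c0. Qed.

Lemma ip2 a b a' b' : ip c 1%:M (mk2 a b) (mk2 a' b') = a * c a' + b * c b'.
Proof.
rewrite /ip mulmx1 !mxE !big_ord_recl big_ord0 !mxE /= addr0 //.
Qed.

Lemma scale_mk2 k a b : k *: mk2 a b = mk2 (k * a) (k * b).
Proof. by apply/rowP => j; rewrite !mxE; case: ifP. Qed.

Lemma mk2_00 : mk2 0 0 = 0.
Proof. by apply/rowP => j; rewrite !mxE; case: ifP. Qed.

Lemma add_mk2 a b a' b' : mk2 a b + mk2 a' b' = mk2 (a + a') (b + b').
Proof. by apply/rowP => j; rewrite !mxE; case: ifP. Qed.

Definition f0 : 'M[K]_2 := \matrix_(i < 2, j < 2) (if (i : nat) == 0%N then 0 else 1).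
Definition Q0 : 'M[K]_2 := \matrix_(i < 2, j < 2) (if (j : nat) == 0%N then 0 else 2^-1).

Lemma mulf a b : mk2 a b *m f0 = mk2 b b.
Proof. by rewrite mk2M !mxE /= !mulr0 !mulr1 !add0r. Qed.

Lemma mulQ a b : mk2 a b *m Q0 = mk2 0 ((a + b) / 2).
Proof. by rewrite mk2M !mxE /= !mulr0 !add0r mulrDl. Qed.

Lemma half2 (b : K) : (b + b) / 2 = b.
Proof. by rewrite -mulr2n -[b *+ 2]mulr_natr mulfK // pnatr_eq0. Qed.

Lemma double0 (a : K) : a + a = 0 -> a = 0.
Proof. by move=> h; rewrite -[a]half2 h mul0r. Qed.

Definition v0 := mk2 1 0.
Definition v1 := mk2 1 1.
Definition H0 (i : 'I_2) : 'M[K]_2 := genmx (if (i : nat) == 0%N then v0 else v1).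

Lemma ip_mk0 (x : 'rV[K]_2) : ip c 1%:M x 0 = 0.
Proof. by rewrite (rv2 x) -mk2_00 ip2 c0 !mulr0 addr0. Qed.

Lemma ip_0mk (x : 'rV[K]_2) : ip c 1%:M 0 x = 0.
Proof. by rewrite (rv2 x) -mk2_00 ip2 !mul0r addr0. Qed.

Lemma inner : is_inner_product c (1%:M : 'M[K]_2).
Proof.
split.
  move=> u v; rewrite (rv2 u) (rv2 v) !ip2 cD !cM !cK.
  by rewrite [u 0 0 * _]mulrC [u 0 1 * _]mulrC.
move=> u; rewrite (rv2 u) ip2.
have [h0|h0] := eqVneq (u 0 0) 0.
  have [h1|h1] := eqVneq (u 0 1) 0.
    by rewrite h0 h1 mk2_00 eqxx.
  by move=> _; rewrite h0 mul0r add0r cpos.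
by move=> _; apply: lt_le_trans (cpos _ h0) _; rewrite lerDl cge0.
Qed.

Lemma stable i : stablemx (H0 i) f0.
Proof.
rewrite /H0 (eqmxMr f0 (genmxE _)) genmxE.
case: i => [[|[|k]] Hi] //=; rewrite mulf ?submx_refl //.
by rewrite mk2_00 sub0mx.
Qed.

Lemma sumH : (\sum_(i < 2) H0 i :=: 1%:M)%MS.
Proof.
apply/eqmxP; apply/andP; split; first exact: submx1.
have s0 : (v0 <= \sum_(i < 2) H0 i)%MS.
  by apply: (sumsmx_sup 0) => //; rewrite /H0 genmxE.
have s1 : (v1 <= \sum_(i < 2) H0 i)%MS.
  by apply: (sumsmx_sup 1) => //; rewrite /H0 genmxE.
apply/row_subP => j; rewrite row1.
case: j => [[|[|k]] Hj] //.
  rewrite (_ : delta_mx _ _ = v0) //; apply/rowP => j; rewrite !mxE.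
  by case: j => [[|[|k]] Hk].
rewrite (_ : delta_mx _ _ = (-1) *: v0 + v1).
  by apply: addmx_sub => //; apply: scalemx_sub.
rewrite scale_mk2 add_mk2 mulN1r mulr0 add0r addNr.
by apply/rowP => j; rewrite !mxE; case: j => [[|[|k]] Hk].
Qed.

Lemma direct : mxdirect (\sum_(i < 2) H0 i).
Proof.
rewrite mxdirectEgeq /= sumH mxrank1.
rewrite !big_ord_recl big_ord0 addn0 /H0 !genmxE.
by rewrite -[2%N]/(1+1)%N leq_add ?rank_leq_row.
Qed.
Lemma blockP : is_block_MP c 1%:M f0 H0 f0.
Proof.
move=> i; rewrite /is_MP_on.
case: i => [[|[|k]] Hi] //; rewrite /H0 /=.
  split.
    move=> y; rewrite (eqmxMr f0 (genmxE _)) /v0 mulf mk2_00 => /submx0null ->.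
    rewrite !mul0mx; split => //; first exact: sub0mx.
    by move=> x _; exact: ip_mk0.
  by move=> y; rewrite genmxE => /sub_rVP [a ->] _; rewrite /v0 scale_mk2 mulf mulr0 mk2_00.
split.
  move=> y; rewrite (eqmxMr f0 (genmxE _)) /v1 mulf => /sub_rVP [a ->].
  rewrite scale_mk2 !mulf mulr1; split => //.
    by rewrite genmxE; apply/sub_rVP; exists a; rewrite scale_mk2 mulr1.
  move=> x; rewrite sub_capmx genmxE => /andP [/sub_rVP [b ->] /sub_kermxP].
  rewrite scale_mk2 mulf mulr1 -mk2_00 => /mk2_inj [-> _]; by rewrite mk2_00 ip_0mk.
move=> y; rewrite genmxE => /sub_rVP [a ->] H.
have := H (mk2 1 1); rewrite (eqmxMr f0 (genmxE _)) /v1 mulf submx_refl => /(_ isT).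
rewrite scale_mk2 ip2 mulr1 !mul1r -cD => /cinj /double0 ->.
by rewrite mk2_00 mul0mx.
Qed.

Lemma MPQ : is_MP c 1%:M f0 Q0.
Proof.
rewrite /is_MP /is_MP_on mul1mx; split.
  move=> y /submxP [x ->]; rewrite (rv2 x) mulf mulQ half2; split.
  - exact: submx1.
  - move=> z; rewrite sub_capmx submx1 /= => /sub_kermxP.
    rewrite (rv2 z) mulf -mk2_00 => /mk2_inj [_ ->].
    by rewrite ip2 c0 mulr0 mul0r addr0.
  - by rewrite mulf.
move=> y _ H.
have : (mk2 1 1 <= f0)%MS by apply/submxP; exists (mk2 0 1); rewrite mulf.
move=> /H; rewrite (rv2 y) ip2 !mul1r -cD => /cinj h.
by rewrite mulQ h mul0r mk2_00.
Qed.

Lemma distinct P Q : is_block_MP c 1%:M f0 H0 P -> is_MP c 1%:M f0 Q -> P != Q.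
Proof.
move=> hP hQ; apply/eqP => PQ; subst Q.
have [h1 _] := hP 1.
have : (v1 <= H0 1 *m f0)%MS.
  by rewrite /H0 /= (eqmxMr f0 (genmxE _)) /v1 mulf submx_refl.
move=> /h1 [hin _ hf]; rewrite /H0 /= genmxE in hin.
case/sub_rVP: hin => a ha; rewrite ha /v1 scale_mk2 mulf mulr1 in hf.
case/mk2_inj: hf => a1 _; rewrite a1 scale_mk2 mulr1 in ha.
have [h _] := hQ.
have : (v1 <= 1%:M *m f0)%MS.
  by rewrite mul1mx; apply/submxP; exists v1; rewrite /v1 mulf.
move=> /h [_ horth _].
have : (v0 <= 1%:M :&: kermx f0)%MS.
  by rewrite sub_capmx submx1; apply/sub_kermxP; rewrite /v0 mulf mk2_00.
move=> /horth; rewrite ha /v0 ip2 mul1r mul0r addr0 => /cinj /eqP.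
by rewrite oner_eq0.
Qed.

Lemma cex : counterexample_exists c 2.
Proof.
exists 1%:M, f0, 2%N, H0; split; split.
- exact: inner.
- exact: stable.
- exact: sumH.
- exact: direct.
- by exists f0; exact: blockP.
- by exists Q0; exact: MPQ.
- exact: distinct.
Qed.

End Gen.

Theorem corollary3p5 :
  (forall R : realType, exists m : nat, @counterexample_exists R id m) /\
  (forall R : realType, exists m : nat, @counterexample_exists R[i] Num.conj m).
Proof.
split=> R; exists 2%N; apply: cex.
- by [].
- by [].
- by [].
- by move=> a ha; rewrite lt0r sqr_ge0 andbT mulf_neq0.
- by move=> a b; rewrite rmorphD.
- by move=> a b; rewrite rmorphM.
- by move=> a; rewrite conjCK.
- by move=> a ha; rewrite mul_conjC_gt0.
Qed.
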